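(* Let $K$ be a definable, definably compact subset of $R^n$. There exists a definable, definably compact subset $E$ of $({}^*\mathbf R)^n$ contained in $A_{\mathrm r}^n$ such that the symmetric difference of $\overline E$ and $K$ has dimension $\le n-1$.
   Context: Notation: ${}^*\mathbf R$ is the ultrapower of $\mathbf R$ along a fixed non-principal ultrafilter on $\mathbf C$ converging to $0$, $t$ the class of $(t)_t$; $a\in{}^*\mathbf R$ is $t$-bounded if $|a|\le|t|^{-N}$ for some integer $N\ge0$ and $t$-negligible if $|a|\le|t|^N$ for all $N\ge0$; $A_{\mathrm r}$ is the ring of $t$-bounded elements, $\mathfrak m_{\mathrm r}$ its maximal ideal of $t$-negligible elements, $R=A_{\mathrm r}/\mathfrak m_{\mathrm r}$ (a real closed field), and $\overline E$ is the image of $E$ under the reduction map $A_{\mathrm r}^n\to R^n$. ''Definable'' means semi-algebraic over the relevant real closed field; definable compactness is in the sense of o-minimal geometry (for semi-algebraic subsets of affine space: closed and bounded). *)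

(* Defs.v *)
From HB Require Import structures.
From mathcomp Require Import all_boot all_order all_algebra.
From mathcomp Require Import reals.
Set Implicit Arguments. Unset Strict Implicit. Unset Printing Implicit Defensive.
Import Order.TTheory GRing.Theory Num.Theory.
Local Open Scope ring_scope.

Section Defs.
Variable R : realType.

Definition cplx := (R * R)%type.
Definition cnorm (t : cplx) : R := Num.sqrt (t.1 ^+ 2 + t.2 ^+ 2).

Definition is_ultrafilter (U : (cplx -> Prop) -> Prop) : Prop :=
  [/\ U (fun _ => True),
      ~ U (fun _ => False),
      (forall A B : cplx -> Prop, (forall t, A t -> B t) -> U A -> U B),
      (forall A B : cplx -> Prop, U A -> U B -> U (fun t => A t /\ B t))
    & (forall A : cplx -> Prop, U A \/ U (fun t => ~ A t))].

Definition non_principal (U : (cplx -> Prop) -> Prop) : Prop :=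
  forall z : cplx, ~ U (fun t => t = z).

Definition converges_to_0 (U : (cplx -> Prop) -> Prop) : Prop :=
  forall eps : R, 0 < eps -> U (fun t => cnorm t < eps).

(* ---------- the ultrapower *R = R^C / U ----------
   Elements of *R are represented by functions C -> R; two representatives
   denote the same element iff they agree on a U-large set.  The ring
   operations and order of *R are pointwise modulo U. *)
Definition star := cplx -> R.

Definition tbounded (U : (cplx -> Prop) -> Prop) (a : star) : Prop :=
  exists N : nat, U (fun t => `|a t| <= (cnorm t) ^- N).

Definition tnegligible (U : (cplx -> Prop) -> Prop) (a : star) : Prop :=
  forall N : nat, U (fun t => `|a t| <= (cnorm t) ^+ N).

(* ---------- polynomial formulas (quantifier-free) ----------
   Polynomials in k variables with real constants; parameters of a
   definable set are passed as extra variables. *)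
Inductive pterm (k : nat) : Type :=
| PVar of 'I_k
| PConst of R
| PAdd of pterm k & pterm k
| POpp of pterm k
| PMul of pterm k & pterm k.

Inductive sform (k : nat) : Type :=
| FEq0 of pterm k
| FGt0 of pterm k
| FNot of sform k
| FAnd of sform k & sform k
| FOr of sform k & sform k.

Fixpoint peval (A : comRingType) (emb : R -> A) (k : nat) (e : 'I_k -> A)
  (p : pterm k) : A :=
  match p with
  | PVar i => e i
  | PConst c => emb c
  | PAdd p q => peval emb e p + peval emb e q
  | POpp p => - peval emb e p
  | PMul p q => peval emb e p * peval emb e q
  end.

Definition peval_star (k : nat) (e : 'I_k -> star) (p : pterm k) : star :=
  fun t => peval id (fun i => e i t) p.

Fixpoint holds_star (U : (cplx -> Prop) -> Prop) (k : nat) (e : 'I_k -> star)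
  (f : sform k) : Prop :=
  match f with
  | FEq0 p => U (fun t => peval_star e p t = 0)
  | FGt0 p => U (fun t => 0 < peval_star e p t)
  | FNot g => ~ holds_star U e g
  | FAnd g h => holds_star U e g /\ holds_star U e h
  | FOr g h => holds_star U e g \/ holds_star U e h
  end.

(* ---------- the residue field R_res = A_r / m_r ----------
   Elements are represented by t-bounded elements of *R; [a] = [b] iff a - b
   is t-negligible; [a] > 0 iff a > 0 and a is not t-negligible, i.e.
   a > |t|^N for some N. *)
Definition res_eq (U : (cplx -> Prop) -> Prop) (a b : star) : Prop :=
  tnegligible U (fun t => a t - b t).

Definition res_pos (U : (cplx -> Prop) -> Prop) (a : star) : Prop :=
  exists N : nat, U (fun t => (cnorm t) ^+ N < a t).

Definition res_lt (U : (cplx -> Prop) -> Prop) (a b : star) : Prop :=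
  res_pos U (fun t => b t - a t).

Fixpoint holds_res (U : (cplx -> Prop) -> Prop) (k : nat) (e : 'I_k -> star)
  (f : sform k) : Prop :=
  match f with
  | FEq0 p => tnegligible U (peval_star e p)
  | FGt0 p => res_pos U (peval_star e p)
  | FNot g => ~ holds_res U e g
  | FAnd g h => holds_res U e g /\ holds_res U e h
  | FOr g h => holds_res U e g \/ holds_res U e h
  end.

Definition joinv (A : Type) (n m : nat) (x : 'I_n -> A) (c : 'I_m -> A)
  : 'I_(n + m) -> A :=
  fun i => match split i with inl j => x j | inr j => c j end.

Definition star_definable (U : (cplx -> Prop) -> Prop) (n : nat)
  (E : ('I_n -> star) -> Prop) : Prop :=
  exists (m : nat) (f : sform (n + m)) (c : 'I_m -> star),
    forall x, E x <-> holds_star U (joinv x c) f.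

Definition star_bounded (U : (cplx -> Prop) -> Prop) (n : nat)
  (E : ('I_n -> star) -> Prop) : Prop :=
  exists M : star, forall x, E x -> forall i, U (fun t => `|x i t| <= M t).

Definition star_closed (U : (cplx -> Prop) -> Prop) (n : nat)
  (E : ('I_n -> star) -> Prop) : Prop :=
  forall x, ~ E x ->
    exists eps : star, U (fun t => 0 < eps t) /\
      forall y, (forall i, U (fun t => `|y i t - x i t| < eps t)) -> ~ E y.

Definition star_def_compact (U : (cplx -> Prop) -> Prop) (n : nat)
  (E : ('I_n -> star) -> Prop) : Prop :=
  star_closed U E /\ star_bounded U E.

(* ---------- subsets of R_res^n ----------
   A subset of R_res^n is given by a predicate on n-tuples of t-bounded
   representatives (its values on other tuples are irrelevant). *)
Definition tbvec (U : (cplx -> Prop) -> Prop) (n : nat) (x : 'I_n -> star) :=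
  forall i, tbounded U (x i).

Definition res_definable (U : (cplx -> Prop) -> Prop) (n : nat)
  (K : ('I_n -> star) -> Prop) : Prop :=
  exists (m : nat) (f : sform (n + m)) (c : 'I_m -> star),
    tbvec U c /\ forall x, tbvec U x -> (K x <-> holds_res U (joinv x c) f).

Definition res_bounded (U : (cplx -> Prop) -> Prop) (n : nat)
  (K : ('I_n -> star) -> Prop) : Prop :=
  exists M : star, tbounded U M /\
    forall x, tbvec U x -> K x -> forall i,
      ~ res_lt U M (x i) /\ ~ res_lt U (x i) (fun t => - M t).

Definition res_inbox (U : (cplx -> Prop) -> Prop) (n : nat)
  (x : 'I_n -> star) (eps : star) (y : 'I_n -> star) : Prop :=
  forall i, res_lt U (fun t => x i t - eps t) (y i) /\
            res_lt U (y i) (fun t => x i t + eps t).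

Definition res_closed (U : (cplx -> Prop) -> Prop) (n : nat)
  (K : ('I_n -> star) -> Prop) : Prop :=
  forall x, tbvec U x -> ~ K x ->
    exists eps : star, tbounded U eps /\ res_pos U eps /\
      forall y, tbvec U y -> res_inbox U x eps y -> ~ K y.

Definition res_def_compact (U : (cplx -> Prop) -> Prop) (n : nat)
  (K : ('I_n -> star) -> Prop) : Prop :=
  res_closed U K /\ res_bounded U K.

Definition reduction (U : (cplx -> Prop) -> Prop) (n : nat)
  (E : ('I_n -> star) -> Prop) : ('I_n -> star) -> Prop :=
  fun y => exists x, E x /\ forall i, res_eq U (x i) (y i).

Definition symdiff (n : nat) (A B : ('I_n -> star) -> Prop)
  : ('I_n -> star) -> Prop :=
  fun y => (A y /\ ~ B y) \/ (B y /\ ~ A y).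

(* ---------- dimension of a definable subset of R_res^n ----------
   dim S >= k iff some coordinate projection R_res^n -> R_res^k maps S onto
   a set with nonempty interior.  res_dim_lt U S k  means  dim S < k. *)
Definition res_proj_has_interior (U : (cplx -> Prop) -> Prop) (n k : nat)
  (S : ('I_n -> star) -> Prop) (s : 'I_k -> 'I_n) : Prop :=
  exists (z : 'I_k -> star) (eps : star),
    tbvec U z /\ tbounded U eps /\ res_pos U eps /\
    forall w, tbvec U w -> res_inbox U z eps w ->
      exists y, tbvec U y /\ S y /\ forall j, res_eq U (y (s j)) (w j).

Definition res_dim_lt (U : (cplx -> Prop) -> Prop) (n : nat)
  (S : ('I_n -> star) -> Prop) (k : nat) : Prop :=
  forall s : 'I_k -> 'I_n, injective s -> ~ res_proj_has_interior U S s.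

End Defs.

(* Main.v *)
Require Import Defs.
From HB Require Import structures.
From mathcomp Require Import all_boot all_order all_algebra.
From mathcomp Require Import reals.
From mathcomp Require Import ring lra.
From Stdlib Require Import Classical ClassicalEpsilon FunctionalExtensionality.
Set Implicit Arguments. Unset Strict Implicit. Unset Printing Implicit Defensive.
Import Order.TTheory GRing.Theory Num.Theory.
Local Open Scope ring_scope.

Section Main.
Variable R : realType.
Variable U : (cplx R -> Prop) -> Prop.
Hypothesis hU : is_ultrafilter U.
Hypothesis hnp : non_principal U.
Hypothesis h0 : converges_to_0 U.

Lemma Umono (A B : cplx R -> Prop) : (forall t, A t -> B t) -> U A -> U B.
Proof. by case: hU => _ _ H _ _; apply: H. Qed.
Lemma Uand (A B : cplx R -> Prop) : U A -> U B -> U (fun t => A t /\ B t).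
Proof. by case: hU => _ _ _ H _; apply: H. Qed.
Lemma Usplit (A : cplx R -> Prop) : U A \/ U (fun t => ~ A t).
Proof. by case: hU => _ _ _ _ H; apply: H. Qed.
Lemma Unot (A : cplx R -> Prop) : U A -> U (fun t => ~ A t) -> False.
Proof.
move=> h1 h2; case: hU => _ H _ _ _; apply: H.
by apply: Umono (Uand h1 h2) => t [].
Qed.
Lemma Utrue (A : cplx R -> Prop) : (forall t, A t) -> U A.
Proof. by move=> h; case: hU => H _ _ _ _; apply: Umono H. Qed.
Lemma Uor (A B : cplx R -> Prop) : U (fun t => A t \/ B t) -> U A \/ U B.
Proof.
move=> h; case: (Usplit A) => hA; first by left.
case: (Usplit B) => hB; first by right.
exfalso; apply: (Unot h); apply: Umono (Uand hA hB) => t [? ?] [] //.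
Qed.
Lemma Unegb (A : cplx R -> Prop) : ~ U A -> U (fun t => ~ A t).
Proof. by move=> h; case: (Usplit A). Qed.

Lemma Ufin k (P : 'I_k -> cplx R -> Prop) :
  (forall i, U (P i)) -> U (fun t => forall i, P i t).
Proof.
move=> h.
have: forall l : seq 'I_k, U (fun t => forall i, i \in l -> P i t).
  elim=> [|a l IH]; first by apply: Utrue.
  apply: Umono (Uand (h a) IH) => t [h1 h2] i; rewrite inE => /orP[/eqP->//|].
  exact: h2.
move=> /(_ (enum 'I_k)); apply: Umono => t H i; apply: H; by rewrite mem_enum.
Qed.

Lemma Uex_fin k (Q : 'I_k -> nat -> cplx R -> Prop) :
  (forall i N N', (N <= N')%N -> forall t, Q i N t -> Q i N' t) ->
  (forall i, exists N, U (Q i N)) -> exists N, U (fun t => forall i, Q i N t).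
Proof.
move=> mono h.
have: forall l : seq 'I_k, exists N, U (fun t => forall i, i \in l -> Q i N t).
  elim=> [|a l [N IH]]; first by exists 0%N; apply: Utrue.
  case: (h a) => Na ha; exists (maxn N Na).
  apply: Umono (Uand ha IH) => t [h1 h2] i; rewrite inE => /orP[/eqP->|hi].
    by apply: mono h1; rewrite leq_maxr.
  by apply: mono (h2 _ hi); rewrite leq_maxl.
move=> /(_ (enum 'I_k)) [N HN]; exists N; apply: Umono HN => t H i; apply: H; by rewrite mem_enum.
Qed.

Local Notation a t := (@cnorm R t).

Lemma cnorm_ge0 t : 0 <= a t.
Proof. by rewrite /cnorm sqrtr_ge0. Qed.

Lemma U_small (r : R) : 0 < r -> U (fun t => 0 < a t /\ a t < r).
Proof.
move=> r0; have H1 := h0 r0; have H2 : U (fun t => ~ t = ((0, 0) : cplx R)) := Unegb (@hnp ((0, 0) : cplx R)).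
move: (Uand H1 H2); apply: Umono => t [h1 h2]; split=> //.
rewrite /cnorm sqrtr_gt0; case: t h2 {h1} => x y /= h.
case: (ltrP 0 (x^+2+y^+2)) => // hle; exfalso; apply: h.
have hx0 := sqr_ge0 x; have hy0 := sqr_ge0 y.
have hx : x ^+ 2 = 0 by lra.
have hy : y ^+ 2 = 0 by lra.
move/eqP: hx; rewrite sqrf_eq0 => /eqP ->; move/eqP: hy; rewrite sqrf_eq0 => /eqP -> //.
Qed.


Lemma U_half : U (fun t => 0 < a t /\ a t <= 2^-1).
Proof.
have h : (0:R) < 2^-1 by rewrite invr_gt0.
by apply: Umono (U_small h) => t [? /ltW].
Qed.

Lemma pow_anti t N M : 0 < a t -> a t <= 1 -> (N <= M)%N -> a t ^+ M <= a t ^+ N.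
Proof. move=> h1 h2 h; apply: ler_wiXn2l => //; exact: ltW. Qed.

Lemma pow_pos t N : 0 < a t -> 0 < a t ^+ N.
Proof. by move=> h; rewrite exprn_gt0. Qed.

Lemma pow_le1 t N : 0 < a t -> a t <= 1 -> a t ^+ N <= 1.
Proof. by move=> h1 h2; rewrite exprn_ile1 // ltW. Qed.

Definition tb' (x : star R) := exists N, U (fun t => `|x t| * a t ^+ N <= 1).

Lemma tbE (x : star R) : tbounded U x <-> tb' x.
Proof.
split=> -[N h]; exists N; apply: Umono (Uand h U_half) => t [h1 [h2 _]].
  by rewrite -ler_pdivlMr ?pow_pos // mul1r.
by rewrite -[_ ^- N]mul1r ler_pdivlMr ?pow_pos.
Qed.

Lemma tb'_mono (x : star R) N M : (N <= M)%N -> U (fun t => `|x t| * a t ^+ N <= 1) ->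
  U (fun t => `|x t| * a t ^+ M <= 1).
Proof.
move=> hNM h; apply: Umono (Uand h U_half) => t [h1 [h2 h3]].
apply: le_trans h1; apply: ler_wpM2l => //; apply: pow_anti => //; lra.
Qed.

Lemma tb_add (x y : star R) : tbounded U x -> tbounded U y -> tbounded U (fun t => x t + y t).
Proof.
move=> /tbE[N hN] /tbE[M hM]; apply/tbE; exists (maxn N M).+1.
have h1 := tb'_mono (leq_maxl N M) hN; have h2 := tb'_mono (leq_maxr N M) hM.
apply: Umono (Uand (Uand h1 h2) U_half) => t [[h1' h2'] [h3 h4]].
rewrite exprSr; move: h1' h2'; set P := a t ^+ maxn N M => h1' h2'.
have hP : 0 < P by rewrite pow_pos.
have hQ : `|x t + y t| * P <= 2.
  apply: le_trans (ler_wpM2r (ltW hP) (ler_normD (x t) (y t))) _.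
  rewrite mulrDl; lra.
rewrite mulrA; have := normr_ge0 (x t + y t).
have : 0 <= `|x t + y t| * P by rewrite mulr_ge0 ?normr_ge0 ?ltW.
move: hQ; set Q := `|x t + y t| * P; nra.
Qed.

Lemma tb_mul (x y : star R) : tbounded U x -> tbounded U y -> tbounded U (fun t => x t * y t).
Proof.
move=> /tbE[N hN] /tbE[M hM]; apply/tbE; exists (N + M)%N.
apply: Umono (Uand (Uand hN hM) U_half) => t [[h1 h2] [h3 h4]].
rewrite normrM exprD mulrACA.
have hu : 0 <= `|x t| * a t ^+ N by rewrite mulr_ge0 ?normr_ge0 ?ltW ?pow_pos.
move: h1 h2 hu; set u := `|x t| * _; set v := `|y t| * _; nra.
Qed.

Lemma tb_const (c : R) : tbounded U (fun _ => c).
Proof.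
apply/tbE; exists 1%N.
have hc : 0 < (`|c| + 1)^-1 by rewrite invr_gt0; have := normr_ge0 c; lra.
apply: Umono (U_small hc) => t [h1 h2]; rewrite expr1.
have hc1 : 0 < `|c| + 1 by have := normr_ge0 c; lra.
have : a t * (`|c| + 1) < 1 by rewrite -ltr_pdivlMr // mul1r.
have := normr_ge0 c; nra.
Qed.

Lemma tb_le (x y : star R) : tbounded U y -> U (fun t => `|x t| <= `|y t|) -> tbounded U x.
Proof.
move=> /tbE[N hN] h; apply/tbE; exists N.
apply: Umono (Uand (Uand hN h) U_half) => t [[h1 h2] [h3 h4]].
apply: le_trans h1; apply: ler_wpM2r => //; exact: ltW (pow_pos _ h3).
Qed.

Lemma tb_opp (x : star R) : tbounded U x -> tbounded U (fun t => - x t).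
Proof. move=> h; apply: (tb_le (x:=fun t => - x t) h); apply: Utrue => t; by rewrite normrN. Qed.

Lemma tb_pow N : tbounded U (fun t => a t ^- N).
Proof.
apply/tbE; exists N; apply: Umono U_half => t [h1 h2].
have hp := pow_pos N h1.
rewrite ger0_norm ?invr_ge0 ?(ltW hp) // mulVf //; by rewrite lt0r_neq0.
Qed.

Lemma ng_add (x y : star R) : tnegligible U x -> tnegligible U y -> tnegligible U (fun t => x t + y t).
Proof.
move=> hx hy N; apply: Umono (Uand (Uand (hx N.+1) (hy N.+1)) U_half) => t [[h1 h2] [h3 h4]].
move: h1 h2; rewrite exprSr => h1 h2.
have := ler_normD (x t) (y t); have := pow_pos N h3; nra.
Qed.

Lemma ng_le (x y : star R) : tnegligible U y -> U (fun t => `|x t| <= `|y t|) -> tnegligible U x.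
Proof.
move=> hy h N; apply: Umono (Uand (hy N) h) => t [h1 h2]; exact: le_trans h2 h1.
Qed.

Lemma ng_mul (x y : star R) : tnegligible U x -> tbounded U y -> tnegligible U (fun t => x t * y t).
Proof.
move=> hx /tbE[M hM] N; apply: Umono (Uand (Uand (hx (N + M)%N) hM) U_half) => t [[h1 h2] [h3 h4]].
move: h1; rewrite exprD normrM => h1.
have := pow_pos N h3; have := pow_pos M h3.
have := normr_ge0 (x t); have := normr_ge0 (y t); nra.
Qed.

Lemma ng_opp (x : star R) : tnegligible U x -> tnegligible U (fun t => - x t).
Proof. move=> h; apply: (ng_le (x:=fun t => - x t) h); apply: Utrue => t; by rewrite normrN. Qed.

Lemma ng_tb (x : star R) : tnegligible U x -> tbounded U x.
Proof.
move=> h; apply/tbE; exists 0%N; apply: Umono (Uand (h 0%N) U_half) => t [h1 _].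
by rewrite expr0 mulr1; rewrite expr0 in h1.
Qed.

Lemma ng_0 : tnegligible U (fun _ => 0).
Proof. move=> N; apply: Umono U_half => t [h1 _]; by rewrite normr0 ltW ?pow_pos. Qed.

Lemma ng_not_pos (x : star R) : tnegligible U x -> ~ res_pos U x.
Proof.
move=> h [N hN]; apply: (Unot (Uand (Uand hN (h N)) U_half)); apply: Utrue => t [[h1 h2] _].
have := ler_norm (x t); lra.
Qed.

Lemma nng (x : star R) : ~ tnegligible U x -> exists N, U (fun t => a t ^+ N < `|x t|).
Proof.
move=> h; have [N hN] := not_all_ex_not _ _ h; exists N.
by apply: Umono (Unegb hN) => t hh; rewrite ltNge; apply/negP.
Qed.

Lemma le_invpow t (x : R) N : 0 < a t -> (`|x| <= a t ^- N) = (`|x| * a t ^+ N <= 1).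
Proof. by move=> h; rewrite -[_ ^- N]mul1r ler_pdivlMr ?pow_pos. Qed.

Lemma tbvec_unif k (e : 'I_k -> star R) : (forall i, tbounded U (e i)) ->
  exists N, forall M, (N <= M)%N -> U (fun t => forall i, `|e i t| <= a t ^- M).
Proof.
move=> h.
have [N HN] : exists N, U (fun t => forall i, 0 < a t /\ a t <= 2^-1 -> `|e i t| * a t ^+ N <= 1).
  apply: Uex_fin.
    move=> i N N' hNN' t H1 H2; apply: le_trans (H1 H2) ; apply: ler_wpM2l => //.
    case: H2 => ? ?; apply: pow_anti => //; lra.
  move=> i; have /tbE[N hN] := h i; exists N; by apply: Umono hN => t ? ?.
exists N => M hM; apply: Umono (Uand HN U_half) => t [H1 [H2 H3]] i.
rewrite le_invpow //; apply: le_trans (H1 i (conj H2 H3)); apply: ler_wpM2l => //.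
apply: pow_anti => //; lra.
Qed.

Fixpoint bnd k (p : pterm R k) (B : R) : R :=
  match p with
  | PVar _ => B
  | PConst c => `|c|
  | PAdd p q => bnd p B + bnd q B
  | POpp p => bnd p B
  | PMul p q => bnd p B * bnd q B
  end.

Fixpoint lip k (p : pterm R k) (B : R) : R :=
  match p with
  | PVar _ => 1
  | PConst c => 0
  | PAdd p q => lip p B + lip q B
  | POpp p => lip p B
  | PMul p q => bnd p B * lip q B + bnd q B * lip p B
  end.

Lemma bnd_ge0 k (p : pterm R k) B : 0 <= B -> 0 <= bnd p B.
Proof.
move=> hB; elim: p => /= [i|c|p hp q hq|p hp|p hp q hq]; try done.
- exact: addr_ge0.
- exact: mulr_ge0.
Qed.

Lemma lip_ge0 k (p : pterm R k) B : 0 <= B -> 0 <= lip p B.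
Proof.
move=> hB; elim: p => /= [i|c|p hp q hq|p hp|p hp q hq]; try done.
- exact: addr_ge0.
- by apply: addr_ge0; apply: mulr_ge0 => //; apply: bnd_ge0.
Qed.

Lemma peval_bnd k (e : 'I_k -> R) B (p : pterm R k) :
  (forall i, `|e i| <= B) -> `|peval id e p| <= bnd p B.
Proof.
move=> he; elim: p => /= [i|c|p hp q hq|p hp|p hp q hq] //.
- exact: le_trans (ler_normD _ _) (lerD hp hq).
- by rewrite normrN.
- by rewrite normrM; apply: ler_pM.
Qed.

Lemma peval_lip k (e e' : 'I_k -> R) B d (p : pterm R k) :
  0 <= B -> 0 <= d ->
  (forall i, `|e i| <= B) -> (forall i, `|e' i| <= B) -> (forall i, `|e i - e' i| <= d) ->
  `|peval id e p - peval id e' p| <= lip p B * d.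
Proof.
move=> hB hd he he' hee; elim: p => /= [i|c|p hp q hq|p hp|p hp q hq].
- by rewrite mul1r.
- by rewrite subrr normr0 mul0r.
- rewrite opprD addrACA mulrDl; exact: le_trans (ler_normD _ _) (lerD hp hq).
- by rewrite -opprD normrN.
- set P := peval id e p; set P' := peval id e' p; set Q := peval id e q; set Q' := peval id e' q.
  have -> : P * Q - P' * Q' = P * (Q - Q') + Q' * (P - P') by ring.
  apply: le_trans (ler_normD _ _) _; rewrite !normrM mulrDl -!mulrA.
  apply: lerD; apply: ler_pM => //; try exact: normr_ge0; try exact: peval_bnd.
Qed.

Lemma tb_bnd k (p : pterm R k) (B : star R) :
  tbounded U B -> tbounded U (fun t => bnd p (B t)).
Proof.
move=> hB; elim: p => /= [i|c|p hp q hq|p hp|p hp q hq] //.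
- exact: tb_const.
- exact: tb_add.
- exact: tb_mul.
Qed.

Lemma tb_lip k (p : pterm R k) (B : star R) :
  tbounded U B -> tbounded U (fun t => lip p (B t)).
Proof.
move=> hB; elim: p => /= [i|c|p hp q hq|p hp|p hp q hq] //; try exact: tb_const.
- exact: tb_add.
- by apply: tb_add; apply: tb_mul => //; apply: tb_bnd.
Qed.

Lemma peval_tb k (e : 'I_k -> star R) (p : pterm R k) :
  (forall i, tbounded U (e i)) -> tbounded U (peval_star e p).
Proof.
move=> he; have [N HN] := tbvec_unif he.
apply: (tb_le (tb_bnd p (tb_pow N))); apply: Umono (HN N (leqnn N)) => t H.
apply: le_trans (peval_bnd p H) _; exact: ler_norm.
Qed.

Lemma peval_cong k (e e' : 'I_k -> star R) (p : pterm R k) :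
  (forall i, tbounded U (e i)) -> (forall i, tbounded U (e' i)) ->
  (forall i, tnegligible U (fun t => e i t - e' i t)) ->
  tnegligible U (fun t => peval_star e p t - peval_star e' p t).
Proof.
move=> he he' hee.
have [N1 H1] := tbvec_unif he; have [N2 H2] := tbvec_unif he'.
set N := maxn N1 N2.
have /tbE[K HK] := tb_lip p (tb_pow N).
move=> M.
have HD := Ufin (fun i => hee i (M + K)%N).
apply: Umono (Uand (Uand (Uand (H1 N (leq_maxl _ _)) (H2 N (leq_maxr _ _))) (Uand HK HD)) U_half).
move=> t [[[B1 B2] [B3 B4]] [B5 B6]].
have hB : 0 <= a t ^- N by rewrite invr_ge0 ltW ?pow_pos.
have := peval_lip p hB (ltW (pow_pos (M + K) B5)) B1 B2 B4.
rewrite /peval_star => h; apply: le_trans h _.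
rewrite exprD; move: B3; rewrite ger0_norm ?lip_ge0 // => B3.
have := pow_pos M B5; have := pow_pos K B5; have := lip_ge0 p hB.
move: B3; set L := lip p _; set u := a t ^+ M; set v := a t ^+ K; nra.
Qed.

Fixpoint sat k (e : 'I_k -> R) (f : sform R k) : Prop :=
  match f with
  | FEq0 p => peval id e p = 0
  | FGt0 p => 0 < peval id e p
  | FNot g => ~ sat e g
  | FAnd g h => sat e g /\ sat e h
  | FOr g h => sat e g \/ sat e h
  end.

Lemma los k (e : 'I_k -> star R) (f : sform R k) :
  holds_star U e f <-> U (fun t => sat (fun i => e i t) f).
Proof.
elim: f => /= [p|p|g IH|g IHg h IHh|g IHg h IHh].
- by [].
- by [].
- split=> H.
    by apply: Unegb => H2; apply: H; apply/IH.
  by move=> /IH H2; apply: Unot H2 H.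
- split=> [[/IHg H1 /IHh H2]|H]; first exact: Uand.
  by split; [apply/IHg|apply/IHh]; apply: Umono H => t [].
- split=> [[/IHg H1|/IHh H2]|H].
  + by apply: Umono H1 => t; left.
  + by apply: Umono H2 => t; right.
  + by case: (Uor H) => H'; [left; apply/IHg|right; apply/IHh].
Qed.

Fixpoint closedf k (f : sform R k) : bool :=
  match f with
  | FNot g => if g is FGt0 _ then true else false
  | FAnd g h => closedf g && closedf h
  | FOr g h => closedf g && closedf h
  | _ => false
  end.

Lemma sum_norm_ge k (e : 'I_k -> R) i : `|e i| <= \sum_j `|e j|.
Proof.
rewrite (bigD1 i) //= lerDl; apply: sumr_ge0 => j _; exact: normr_ge0.
Qed.

Lemma open_compl k (g : sform R k) (e : 'I_k -> R) : closedf g -> ~ sat e g ->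
  exists eta, 0 < eta /\ forall e', (forall i, `|e' i - e i| < eta) -> ~ sat e' g.
Proof.
elim: g => //= [[p|p|g'|g' h'|g' h'] //|g IHg h IHh|g IHg h IHh].
- move=> _ _ hnn; have hp : 0 < peval id e p := NNPP _ hnn.
  set B := 1 + \sum_j `|e j|.
  have hB : 0 <= B by rewrite /B; apply: addr_ge0 => //; apply: sumr_ge0 => j _; exact: normr_ge0.
  set L := lip p B.
  have hL : 0 <= L by apply: lip_ge0.
  move: hp; set q := peval id e p => hp.
  exists (Num.min 1 (q / (L + 1))); split.
    by rewrite lt_min ltr01 /= divr_gt0 //; lra.
  move=> e' he' hneg; apply: hneg.
  move: he'; set eta := Num.min 1 (q / (L + 1)) => he'.
  have heta1 : eta <= 1 by rewrite ge_min lexx.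
  have heta2 : eta * (L + 1) <= q.
    by rewrite -ler_pdivlMr; [rewrite ge_min lexx orbT | lra].
  have hetap : 0 < eta by rewrite lt_min ltr01 /= divr_gt0 //; lra.
  have hb1 : forall i, `|e i| <= B by move=> i; have := sum_norm_ge e i; rewrite /B; lra.
  have hb2 : forall i, `|e' i| <= B.
    move=> i; have := sum_norm_ge e i; have := he' i.
    have := ler_normD (e' i - e i) (e i); rewrite subrK /B.
    lra.
  have hd : forall i, `|e i - e' i| <= eta by move=> i; rewrite distrC; exact: ltW.
  have := peval_lip p hB (ltW hetap) hb1 hb2 hd.
  rewrite -/q -/L => hh.
  have := ler_norm (q - peval id e' p).
  move: heta2 hh; set Le := L * eta; rewrite mulrDr mulr1 mulrC -/Le.
  rewrite /=; lra.
- move=> /andP[cg ch] /not_and_or [ng|nh].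
    have [eta [h1 h2]] := IHg cg ng; exists eta; split=> // e' he' [hg _]; exact: h2 he' hg.
  have [eta [h1 h2]] := IHh ch nh; exists eta; split=> // e' he' [_ hh]; exact: h2 he' hh.
- move=> /andP[cg ch] /not_or_and [ng nh].
  have [eta1 [h1 h2]] := IHg cg ng; have [eta2 [h3 h4]] := IHh ch nh.
  exists (Num.min eta1 eta2); split; first by rewrite lt_min h1 h3.
  move=> e' he' [].
    by apply: h2 => i; apply: lt_le_trans (he' i) _; rewrite ge_min lexx.
  by apply: h4 => i; apply: lt_le_trans (he' i) _; rewrite ge_min lexx orbT.
Qed.

Lemma closed_E n m (c : 'I_m -> star R) (g : sform R (n + m)) :
  closedf g -> star_closed U (fun x => holds_star U (joinv x c) g).
Proof.
move=> cg x hx.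
pose jx t := fun i => joinv x c i t.
have H : forall t, exists eta : R, 0 < eta /\ (~ sat (jx t) g ->
    forall e', (forall i, `|e' i - jx t i| < eta) -> ~ sat e' g).
  move=> t; case: (classic (sat (jx t) g)) => hs.
    by exists 1; split=> //; rewrite ltr01.
  have [eta [h1 h2]] := open_compl cg hs; by exists eta; split.
pose eps t := proj1_sig (constructive_indefinite_description _ (H t)).
have heps t : 0 < eps t /\ (~ sat (jx t) g ->
    forall e', (forall i, `|e' i - jx t i| < eps t) -> ~ sat e' g).
  exact: (proj2_sig (constructive_indefinite_description _ (H t))).
exists eps; split; first by apply: Utrue => t; case: (heps t).
move=> y hy hEy.
have hU1 : U (fun t => ~ sat (jx t) g).
  by apply: Unegb => hh; apply: hx; apply/los.
have hU2 := Ufin hy.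
have hU3 := proj1 (los _ _) hEy.
apply: (Unot hU3); apply: Umono (Uand hU1 hU2) => t [h1 h2].
case: (heps t) => hp hi; apply: (hi h1 (fun i => joinv y c i t)) => i.
rewrite /jx /joinv; case: (split i) => j /=; first exact: h2.
by rewrite subrr normr0.
Qed.

Lemma poly_factor (g : {poly R}) (c : R) d : (size g <= d.+1)%N ->
  exists h : {poly R}, (size h <= d)%N /\
    forall y, g.[y] = g.[c] + (y - c) * h.[y].
Proof.
move=> hg.
set D := 'X - c%:P.
have hD : D != 0 by rewrite -size_poly_eq0 size_XsubC.
have dv : D %| g - g.[c]%:P by rewrite dvdp_XsubCl rootE !hornerE subrr.
exists ((g - g.[c]%:P) %/ D); split.
  rewrite size_divp // size_XsubC /= leq_subLR add1n.
  apply: leq_trans (size_polyD _ _) _; rewrite size_polyN geq_max hg /=.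
  by apply: leq_trans (size_polyC_leq1 _) _.
move=> y; have := congr1 (fun q => q.[y]) (divpK dv).
rewrite /= hornerM hornerXsubC hornerD hornerN hornerC => H.
by rewrite [(y - c) * _]mulrC H; ring.
Qed.

Lemma ng_eq (x y : star R) : tnegligible U y -> U (fun t => x t = y t) -> tnegligible U x.
Proof. move=> hy h; apply: ng_le hy _; apply: Umono h => t ->; exact: lexx. Qed.

Lemma tb_eq (x y : star R) : tbounded U y -> U (fun t => x t = y t) -> tbounded U x.
Proof. move=> hy h; apply: tb_le hy _; apply: Umono h => t ->; exact: lexx. Qed.

Lemma tb_inv_pos (y : star R) : res_pos U y -> tbounded U (fun t => (y t)^-1).
Proof.
move=> [N hN]; apply: (tb_le (tb_pow N)); apply: Umono (Uand hN U_half) => t [h1 [h2 h3]].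
have hp := pow_pos N h2.
have hy : 0 < y t by apply: lt_trans h1.
rewrite !ger0_norm ?invr_ge0 ?(ltW hy) ?(ltW hp) //.
rewrite lef_pV2 ?posrE //; exact: ltW.
Qed.

Lemma res_pos_le (x y : star R) : res_pos U y -> U (fun t => y t <= x t) -> res_pos U x.
Proof. move=> [N hN] h; exists N; apply: Umono (Uand hN h) => t [h1 h2]; exact: lt_le_trans h2. Qed.

Lemma interp d : forall (gp : cplx R -> {poly R}) (sg eta : star R),
  (forall t, (size (gp t) <= d.+1)%N) -> tbounded U sg -> tbounded U eta -> res_pos U eta ->
  (forall j, (j <= d)%N -> tnegligible U (fun t => (gp t).[sg t + j%:R * eta t])) ->
  forall x, tbounded U x -> tnegligible U (fun t => (gp t).[x t]).
Proof.
elim: d => [|d IH] gp sg eta hs hsg hetab heta hj x hx.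
  apply: ng_eq (hj 0%N (leqnn _)) _; apply: Utrue => t.
  by rewrite (size1_polyC (hs t)) !hornerC.
have H : forall t, exists h : {poly R}, (size h <= d.+1)%N /\
    forall y, (gp t).[y] = (gp t).[sg t] + (y - sg t) * h.[y].
  move=> t; exact: poly_factor (hs t).
pose hp t := proj1_sig (constructive_indefinite_description _ (H t)).
have hhp t : (size (hp t) <= d.+1)%N /\
    forall y, (gp t).[y] = (gp t).[sg t] + (y - sg t) * (hp t).[y].
  exact: (proj2_sig (constructive_indefinite_description _ (H t))).
have g0 : tnegligible U (fun t => (gp t).[sg t]).
  apply: (ng_eq (x := fun t => (gp t).[sg t]) (hj 0%N isT)); apply: Utrue => t; by rewrite mul0r addr0.
have hh : forall x, tbounded U x -> tnegligible U (fun t => (hp t).[x t]).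
  apply: (IH hp (fun t => sg t + eta t) eta) => //.
  - by move=> t; exact: (hhp t).1.
  - exact: tb_add.
  - move=> j hjd.
    have hpos : res_pos U (fun t => (j.+1)%:R * eta t).
      apply: (res_pos_le heta); case: heta => M hM; apply: Umono (Uand hM U_half) => t [h1 [h2 _]].
      have he : 0 < eta t by apply: lt_trans h1; exact: pow_pos.
      rewrite ler_pMl // ler1n //.
    have hinv := tb_inv_pos hpos.
    have hg := hj j.+1 hjd.
    have := ng_mul (ng_add hg (ng_opp g0)) hinv.
    move=> H2; apply: ng_eq H2 _.
    case: heta => M hM; apply: Umono (Uand hM U_half) => t [h1 [h2 _]].
    have he : 0 < eta t by apply: lt_trans h1; exact: pow_pos.
    case: (hhp t) => _ ->.
    have -> : (j.+1)%:R = j%:R + 1 :> R by rewrite mulrSr.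
    have hj0 : 0 < j%:R + 1 :> R by rewrite ltr_wpDl // ler0n.
    have -> : sg t + (j%:R+1) * eta t = sg t + eta t + j%:R * eta t by ring.
    have n1 : j%:R + 1 != 0 :> R by rewrite gt_eqF.
    have n2 : eta t != 0 by rewrite gt_eqF.
    field; by rewrite n1 n2.
have := ng_add g0 (ng_mul (hh x hx) (tb_add hx (tb_opp hsg))).
move=> H3; apply: ng_eq H3 _; apply: Utrue => t.
by case: (hhp t) => _ ->; rewrite mulrC.
Qed.

Fixpoint deg k (p : pterm R k) : nat :=
  match p with
  | PVar _ => 1%N
  | PConst _ => 0%N
  | PAdd p q => maxn (deg p) (deg q)
  | POpp p => deg p
  | PMul p q => (deg p + deg q)%N
  end.

Lemma horner_peval k (E : 'I_k -> {poly R}) (p : pterm R k) s :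
  (peval polyC E p).[s] = peval id (fun i => (E i).[s]) p.
Proof.
elim: p => /= [i|c|p hp q hq|p hp|p hp q hq].
- by [].
- by rewrite hornerC.
- by rewrite hornerD hp hq.
- by rewrite hornerN hp.
- by rewrite hornerM hp hq.
Qed.

Lemma size_peval k (E : 'I_k -> {poly R}) (p : pterm R k) :
  (forall i, (size (E i) <= 2)%N) -> (size (peval polyC E p) <= (deg p).+1)%N.
Proof.
move=> hE; elim: p => /= [i|c|p hp q hq|p hp|p hp q hq].
- exact: hE.
- exact: size_polyC_leq1.
- apply: leq_trans (size_polyD _ _) _; rewrite geq_max.
  apply/andP; split; [apply: leq_trans hp _|apply: leq_trans hq _]; by rewrite ltnS ?leq_maxl ?leq_maxr.
- by rewrite size_polyN.
- apply: leq_trans (size_polyMleq _ _) _.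
  have := leq_add hp hq; rewrite addSn addnS => h.
  by rewrite -subn1 leq_subLR add1n.
Qed.

Lemma size_lin (c d : R) : (size (c%:P + 'X * d%:P)%R <= 2)%N.
Proof.
apply: leq_trans (size_polyD _ _) _; rewrite geq_max; apply/andP; split.
  by apply: leq_trans (size_polyC_leq1 _) _.
apply: leq_trans (size_polyMleq _ _) _; rewrite size_polyX.
by have := size_polyC_leq1 d; case: (size d%:P) => [|[]].
Qed.

Lemma tb_pow_pos Q : tbounded U (fun t => a t ^+ Q).
Proof.
apply/tbE; exists 0%N; apply: Umono U_half => t [h1 h2].
rewrite expr0 mulr1 ger0_norm; [apply: pow_le1 => //; lra | exact: ltW (pow_pos _ h1)].
Qed.

Lemma res_pos_pow Q : res_pos U (fun t => a t ^+ Q).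
Proof.
exists Q.+1; apply: Umono U_half => t [h1 h2].
rewrite exprSr gtr_pMr ?pow_pos //; lra.
Qed.

Lemma U_smalln (d : nat) : U (fun t => 0 < a t /\ a t <= 2^-1 /\ d%:R * a t <= 1).
Proof.
have hr : 0 < (d%:R + 1 : R)^-1 by rewrite invr_gt0 ltr_wpDl // ler0n.
apply: Umono (Uand (U_small hr) U_half) => t [[h1 h2] [_ h3]]; split=> //; split=> //.
have hd : 0 < d%:R + 1 :> R by rewrite ltr_wpDl // ler0n.
have : a t * (d%:R + 1) < 1 by rewrite -ltr_pdivlMr // mul1r.
have := ler0n R d; nra.
Qed.

Lemma ident n m (c : 'I_m -> star R) (p : pterm R (n + m)) (av z : 'I_n -> star R) (eps : star R) :
  tbvec U c -> tbvec U av -> tbvec U z -> ~ tnegligible U (peval_star (joinv av c) p) ->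
  res_pos U eps ->
  exists w, tbvec U w /\ res_inbox U z eps w /\ ~ tnegligible U (peval_star (joinv w c) p).
Proof.
move=> hc ha hz hna [Ne hNe].
set d := deg p.
have [N1 H1] := tbvec_unif ha; have [N2 H2] := tbvec_unif hz.
set N0 := maxn N1 N2.
have HA := H1 N0 (leq_maxl _ _); have HZ := H2 N0 (leq_maxr _ _).
set Q := (N0 + Ne.+2)%N.
pose eta t := a t ^+ Q.
pose w k i t := z i t + (k%:R * eta t) * (av i t - z i t).
pose gp t := peval polyC (joinv (fun i => (z i t)%:P + 'X * (av i t - z i t)%:P) (fun j => (c j t)%:P)) p.
have gpE1 : forall k t, (gp t).[0 + k%:R * eta t] = peval_star (joinv (w k) c) p t.
  move=> k t; rewrite /gp horner_peval /peval_star; congr (peval id _ p); apply: functional_extensionality => i.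
  rewrite /joinv; case: (split i) => j /=; rewrite ?hornerD ?hornerM ?hornerX !hornerC //.
  by rewrite /w add0r.
have gpE2 : forall t, (gp t).[1] = peval_star (joinv av c) p t.
  move=> t; rewrite /gp horner_peval /peval_star; congr (peval id _ p); apply: functional_extensionality => i.
  rewrite /joinv; case: (split i) => j /=; rewrite ?hornerD ?hornerM ?hornerX !hornerC //.
  by rewrite mul1r addrC subrK.
have [k [hk hnk]] : exists k, (k <= d)%N /\ ~ tnegligible U (peval_star (joinv (w k) c) p).
  apply: NNPP => hne; apply: hna.
  have hall : forall j, (j <= d)%N -> tnegligible U (fun t => (gp t).[(fun _ => 0) t + j%:R * eta t]).
    move=> j hj; have hh : tnegligible U (peval_star (joinv (w j) c) p).
      by apply: NNPP => h; apply: hne; exists j.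
    apply: ng_eq hh _; apply: Utrue => t; exact: gpE1.
  have hsz : forall t, (size (gp t) <= d.+1)%N.
    move=> t; apply: size_peval => i; rewrite /joinv; case: (split i) => j.
      exact: size_lin.
    by apply: leq_trans (size_polyC_leq1 _) _.
  have := interp hsz (tb_const 0) (tb_pow_pos Q) (res_pos_pow Q) hall (tb_const 1).
  move=> hh; apply: ng_eq hh _; apply: Utrue => t; by rewrite gpE2.
have hbnd : U (fun t => forall i, `|w k i t - z i t| <= a t ^+ Ne.+1).
  apply: Umono (Uand (Uand HA HZ) (U_smalln (2 * d))) => t [[hA hZ] [h1 [h2 h3]]] i.
  have hX : `|av i t - z i t| * a t ^+ N0 <= 2.
    have := hA i; have := hZ i; rewrite !le_invpow // => u v.
    apply: le_trans (ler_wpM2r (ltW (pow_pos _ h1)) (ler_normB _ _)) _.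
    rewrite mulrDl; lra.
  have hX0 : 0 <= `|av i t - z i t| * a t ^+ N0 by rewrite mulr_ge0 ?normr_ge0 ?ltW ?pow_pos.
  have -> : w k i t - z i t = (k%:R * eta t) * (av i t - z i t) by rewrite /w addrC addKr.
  rewrite normrM ger0_norm; last by rewrite mulr_ge0 ?ler0n // ltW ?pow_pos.
  rewrite /eta /Q exprD.
  have -> : k%:R * (a t ^+ N0 * a t ^+ Ne.+2) * `|av i t - z i t| =
            a t ^+ Ne.+1 * (a t * (k%:R * (`|av i t - z i t| * a t ^+ N0))).
    by rewrite exprSr; ring.
  rewrite -[leRHS]mulr1; apply: ler_wpM2l; first by rewrite ltW ?pow_pos.
  have hk' : k%:R <= d%:R :> R by rewrite ler_nat.
  have : k%:R * (`|av i t - z i t| * a t ^+ N0) <= d%:R * 2.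
    by apply: ler_pM => //; rewrite ler0n.
  move: h3; rewrite natrM => h3.
  have := ltW h1; move: hX0; set X := `|av i t - z i t| * a t ^+ N0.
  have := ler0n R k; have := ler0n R d; nra.
exists (w k); split; last split => //.
- move=> i; apply: (tb_eq (y := fun t => z i t + (w k i t - z i t))).
    apply: tb_add => //; apply: (tb_le (tb_const 1)); apply: Umono (Uand hbnd U_half) => t [hb [h1 h2]].
    rewrite normr1; apply: le_trans (hb i) _; apply: pow_le1 => //; lra.
  by apply: Utrue => t; rewrite addrC subrK.
- move=> i; split; exists Ne.+1; apply: Umono (Uand (Uand hbnd hNe) U_half) => t [[hb he] [h1 h2]];
    have := hb i; have := ler_norm (w k i t - z i t); have := ler_norm (- (w k i t - z i t));
    rewrite normrN exprSr; have := pow_pos Ne h1; move: he; set P := a t ^+ Ne => he hP;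
    have hPa : P * a t <= P * 2^-1 by rewrite ler_wpM2l // ltW.
  + move=> h4 h5 h6; lra.
  + move=> h4 h5 h6; lra.
Qed.

Lemma tbvec_join n m (w : 'I_n -> star R) (c : 'I_m -> star R) :
  tbvec U w -> tbvec U c -> forall i, tbounded U (joinv w c i).
Proof. by move=> hw hc i; rewrite /joinv; case: (split i) => j. Qed.

Lemma inbox_close n (w v : 'I_n -> star R) (e : star R) :
  res_inbox U w e v -> U (fun t => forall i, `|v i t - w i t| < e t).
Proof.
move=> hb; apply: Ufin => i; case: (hb i) => [[k1 h1] [k2 h2]].
apply: Umono (Uand (Uand h1 h2) U_half) => t [[u1 u2] [u3 _]].
have := pow_pos k1 u3; have := pow_pos k2 u3 => p1 p2.
rewrite ltr_norml; apply/andP; split; lra.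
Qed.

Lemma cont_nz n m (c : 'I_m -> star R) (p : pterm R (n + m)) (w : 'I_n -> star R) :
  tbvec U c -> tbvec U w -> ~ tnegligible U (peval_star (joinv w c) p) ->
  exists e, tbounded U e /\ res_pos U e /\
    forall v, res_inbox U w e v -> ~ tnegligible U (peval_star (joinv v c) p).
Proof.
move=> hc hw hn.
have [N hN] := nng hn.
have [N0 H0] := tbvec_unif (tbvec_join hw hc).
have HB := H0 N0 (leqnn _).
pose B t := a t ^- N0 + 1.
have /tbE[K hK] := tb_lip p (tb_add (tb_pow N0) (tb_const 1)).
exists (fun t => a t ^+ (N + K).+1); split; first exact: tb_pow_pos.
split; first exact: res_pos_pow.
move=> v hv hneg.
have hcl := inbox_close hv.
apply: (Unot (Uand (Uand (Uand hN (hneg N.+1)) (Uand hK hcl)) (Uand HB U_half))); apply: Utrue.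
move=> t [[[h1 h2] [h3 h4]] [h5 [h6 h7]]].
have hB0 : 0 <= a t ^- N0 + 1 by rewrite addr_ge0 ?invr_ge0 ?ltW ?pow_pos.
have hd0 : 0 <= a t ^+ (N + K).+1 by rewrite ltW ?pow_pos.
have hb1 : forall i, `|joinv w c i t| <= a t ^- N0 + 1.
  by move=> i; apply: le_trans (h5 i) _; rewrite lerDl.
have hb2 : forall i, `|joinv v c i t| <= a t ^- N0 + 1.
  move=> i; rewrite /joinv; case E: (split i) => [j|j].
    have := h4 j; have := h5 (unsplit (inl j)); rewrite /joinv unsplitK => u1 u2.
    have := ler_normD (v j t - w j t) (w j t); rewrite subrK => u3.
    apply: le_trans u3 _; rewrite addrC; apply: lerD => //; apply: le_trans (ltW u2) _; apply: pow_le1 => //; lra.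
  by have := h5 i; rewrite /joinv E => u; apply: le_trans u _; rewrite lerDl.
have hd : forall i, `|joinv w c i t - joinv v c i t| <= a t ^+ (N + K).+1.
  move=> i; rewrite /joinv; case: (split i) => j.
    by rewrite distrC; apply: ltW (h4 j).
  by rewrite subrr normr0.
have := peval_lip p hB0 hd0 hb1 hb2 hd; rewrite -/(peval_star _ _ t) -/(peval_star _ _ t).
move: h3; rewrite ger0_norm ?lip_ge0 // => h3.
move=> hL; move: h3 hL; set L := lip p _ => h3 hL.
have hL0 : 0 <= L by apply: lip_ge0.
have e1 : L * a t ^+ (N + K).+1 <= a t ^+ N.+1.
  rewrite -addSn exprD mulrCA -[leRHS]mulr1.
  by apply: ler_wpM2l => //; rewrite ltW ?pow_pos.
have e2 : a t ^+ N.+1 <= a t ^+ N * 2^-1 by rewrite exprSr ler_wpM2l // ltW ?pow_pos.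
have := ler_normD (peval_star (joinv w c) p t - peval_star (joinv v c) p t) (peval_star (joinv v c) p t).
rewrite subrK => tri.
have : a t ^+ N * 2^-1 + a t ^+ N * 2^-1 = a t ^+ N by rewrite -mulrDr -[2^-1]mul1r -splitr mulr1.
lra.
Qed.

Lemma res_pos_half (e : star R) : res_pos U e -> res_pos U (fun t => e t * 2^-1).
Proof.
move=> [N hN]; exists N.+1; apply: Umono (Uand hN U_half) => t [h1 [h2 h3]].
rewrite exprSr; have := pow_pos N h2; move: h1; set P := a t ^+ N => h1 hP.
have : P * a t <= P * 2^-1 by rewrite ler_wpM2l // ltW.
have : P * 2^-1 < e t * 2^-1 by rewrite ltr_pM2r // invr_gt0.
lra.
Qed.

Lemma res_pos_min (e1 e2 : star R) : res_pos U e1 -> res_pos U e2 ->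
  res_pos U (fun t => Num.min (e1 t) (e2 t)).
Proof.
move=> [N1 h1] [N2 h2]; exists (maxn N1 N2).
apply: Umono (Uand (Uand h1 h2) U_half) => t [[u1 u2] [u3 u4]].
rewrite lt_min; apply/andP; split.
  apply: le_lt_trans u1; apply: pow_anti => //; [lra|exact: leq_maxl].
apply: le_lt_trans u2; apply: pow_anti => //; [lra|exact: leq_maxr].
Qed.

Lemma res_pos_gt0 (e : star R) : res_pos U e -> U (fun t => 0 < e t).
Proof.
move=> [N h]; apply: Umono (Uand h U_half) => t [u1 [u2 _]]; apply: lt_trans u1; exact: pow_pos.
Qed.

Lemma inbox_sub n (z w v : 'I_n -> star R) (e1 e2 e : star R) :
  res_inbox U z e1 w -> U (fun t => e1 t + e2 t <= e t) -> res_inbox U w e2 v ->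
  res_inbox U z e v.
Proof.
move=> hw he hv i; case: (hw i) => hw1 hw2; case: (hv i) => hv1 hv2.
have p1 := res_pos_gt0 hv1; have p2 := res_pos_gt0 hv2.
split.
  apply: (res_pos_le hw1); apply: Umono (Uand he p1) => t [u1 u2] /=; lra.
apply: (res_pos_le hw2); apply: Umono (Uand he p2) => t [u1 u2] /=; lra.
Qed.

Lemma inbox_mono n (w v : 'I_n -> star R) (e1 e : star R) :
  U (fun t => e1 t <= e t) -> res_inbox U w e1 v -> res_inbox U w e v.
Proof.
move=> he hv i; case: (hv i) => hv1 hv2; split.
  apply: (res_pos_le hv1); apply: Umono he => t u /=; lra.
apply: (res_pos_le hv2); apply: Umono he => t u /=; lra.
Qed.

Definition Zp n m (c : 'I_m -> star R) (p : pterm R (n + m)) : Prop :=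
  forall y, tbvec U y -> tnegligible U (peval_star (joinv y c) p).

Fixpoint goodf n m (c : 'I_m -> star R) (f : sform R (n + m)) (x : 'I_n -> star R) : Prop :=
  match f with
  | FEq0 p => ~ Zp c p -> ~ tnegligible U (peval_star (joinv x c) p)
  | FGt0 p => ~ Zp c p -> ~ tnegligible U (peval_star (joinv x c) p)
  | FNot g => goodf c g x
  | FAnd g h => goodf c g x /\ goodf c h x
  | FOr g h => goodf c g x /\ goodf c h x
  end.

Lemma nowhere_atom n m (c : 'I_m -> star R) (p : pterm R (n + m)) :
  tbvec U c -> forall z e, tbvec U z -> res_pos U e ->
  exists z' e', tbvec U z' /\ res_pos U e' /\ forall v, res_inbox U z' e' v ->
    res_inbox U z e v /\ (~ Zp c p -> ~ tnegligible U (peval_star (joinv v c) p)).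
Proof.
move=> hc z e hz he.
case: (classic (Zp c p)) => hZ.
  exists z, e; split=> //; split=> // v hv; split=> //.
have [y [hy hny]] : exists y, tbvec U y /\ ~ tnegligible U (peval_star (joinv y c) p).
  apply: NNPP => H; apply: hZ => y hy; apply: NNPP => h; apply: H; by exists y.
have [w [hw [hwb hwn]]] := ident hc hy hz hny (res_pos_half he).
have [e1 [_ [he1 hcont]]] := cont_nz hc hw hwn.
exists w, (fun t => Num.min (e1 t) (e t * 2^-1)); split=> //; split.
  exact: (res_pos_min he1 (res_pos_half he)).
move=> v hv; split.
  apply: (inbox_sub hwb _ hv); apply: Utrue => t /=.
  have : Num.min (e1 t) (e t * 2^-1) <= e t * 2^-1 by rewrite ge_min lexx orbT.
  have : e t * 2^-1 + e t * 2^-1 = e t by rewrite -mulrDr -[2^-1]mul1r -splitr mulr1.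
  lra.
move=> _; apply: hcont; apply: (inbox_mono _ hv); apply: Utrue => t; by rewrite ge_min lexx.
Qed.

Lemma nowhere n m (c : 'I_m -> star R) (f : sform R (n + m)) :
  tbvec U c -> forall z e, tbvec U z -> res_pos U e ->
  exists z' e', tbvec U z' /\ res_pos U e' /\ forall v, res_inbox U z' e' v ->
    res_inbox U z e v /\ goodf c f v.
Proof.
move=> hc; elim: f => [p|p|g IH|g IHg h IHh|g IHg h IHh] z e hz he /=.
- exact: nowhere_atom.
- exact: nowhere_atom.
- exact: IH.
- have [z1 [e1 [hz1 [he1 H1]]]] := IHg z e hz he.
  have [z2 [e2 [hz2 [he2 H2]]]] := IHh z1 e1 hz1 he1.
  exists z2, e2; split=> //; split=> // v hv.
  have [b1 g2] := H2 v hv; have [b0 g1] := H1 v b1; by split.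
- have [z1 [e1 [hz1 [he1 H1]]]] := IHg z e hz he.
  have [z2 [e2 [hz2 [he2 H2]]]] := IHh z1 e1 hz1 he1.
  exists z2, e2; split=> //; split=> // v hv.
  have [b1 g2] := H2 v hv; have [b0 g1] := H1 v b1; by split.
Qed.

Lemma nn_sign (q : star R) : ~ tnegligible U q -> ~ (~ U (fun t => 0 < q t) /\ ~ U (fun t => 0 < - q t)).
Proof.
move=> hq [h1 h2]; have [N hN] := nng hq.
have : U (fun t => 0 < q t \/ 0 < - q t).
  apply: Umono (Uand hN U_half) => t [u [v _]].
  have hp := pow_pos N v.
  have := ler_norm (q t); have := ler_norm (- q t); rewrite normrN.
  case: (ltrP 0 (q t)) => hq0; first by left.
  by right; rewrite oppr_gt0; move: hq0; rewrite le_eqVlt => /orP[/eqP e|//];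
     move: u; rewrite e normr0 => u; lra.
by case/Uor.
Qed.

Lemma nn_pos (q : star R) : ~ tnegligible U q -> (~ U (fun t => 0 < - q t) <-> res_pos U q).
Proof.
move=> hq; have [N hN] := nng hq; split=> H.
  exists N; apply: Umono (Uand (Uand hN (Unegb H)) U_half) => t [[u1 u2] _].
  have u3 : 0 <= q t by rewrite -oppr_le0 leNgt; exact/negP.
  by rewrite ger0_norm in u1.
case: H => M hM hneg; apply: (Unot hneg); apply: Umono (Uand hM U_half) => t [u [v _]].
have := pow_pos M v; lra.
Qed.

Lemma nn_neg (q : star R) : ~ tnegligible U q -> (~ U (fun t => 0 < q t) <-> ~ res_pos U q).
Proof.
move=> hq; have [N hN] := nng hq; split=> H.
  move=> [M hM]; apply: H; apply: Umono (Uand hM U_half) => t [u [v _]].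
  have := pow_pos M v; lra.
move=> hp; apply: H; exists N; apply: Umono (Uand hN hp) => t [u1 u2].
by rewrite gtr0_norm in u1.
Qed.

Lemma env_diff n m (c : 'I_m -> star R) (x y : 'I_n -> star R) :
  (forall i, tnegligible U (fun t => x i t - y i t)) ->
  forall i, tnegligible U (fun t => joinv x c i t - joinv y c i t).
Proof.
move=> h i; rewrite /joinv; case: (split i) => j; first exact: h.
apply: (ng_eq ng_0); apply: Utrue => t; by rewrite subrr.
Qed.

Lemma env_cong n m (c : 'I_m -> star R) (p : pterm R (n + m)) (x y : 'I_n -> star R) :
  tbvec U c -> tbvec U x -> tbvec U y -> (forall i, tnegligible U (fun t => x i t - y i t)) ->
  tnegligible U (fun t => peval_star (joinv x c) p t - peval_star (joinv y c) p t).
Proof.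
move=> hc hx hy h; apply: peval_cong; try exact: tbvec_join.
exact: env_diff.
Qed.

Lemma ng_swap (x y : star R) : tnegligible U (fun t => x t - y t) -> tnegligible U (fun t => y t - x t).
Proof. move=> h; apply: (ng_eq (ng_opp h)); apply: Utrue => t; by rewrite opprB. Qed.

Lemma ng_transfer (x y : star R) : tnegligible U x -> tnegligible U (fun t => x t - y t) -> tnegligible U y.
Proof. move=> h1 h2; apply: (ng_eq (ng_add h1 (ng_opp h2))); apply: Utrue => t; by rewrite opprB addrC subrK. Qed.

Lemma res_pos_transfer (x y : star R) : res_pos U x -> tnegligible U (fun t => x t - y t) -> res_pos U y.
Proof.
move=> [N hN] h; exists N.+1; apply: Umono (Uand (Uand hN (h N.+1)) U_half) => t [[u1 u2] [u3 u4]].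
move: u2; rewrite exprSr => u2.
have := ler_norm (x t - y t); have := pow_pos N u3; move: u1 u2; set P := a t ^+ N => u1 u2 hP.
have : P * a t <= P * 2^-1 by rewrite ler_wpM2l // ltW.
have : P * 2^-1 + P * 2^-1 = P by rewrite -mulrDr -[2^-1]mul1r -splitr mulr1.
lra.
Qed.

Lemma holds_res_cong n m (c : 'I_m -> star R) (f : sform R (n + m)) (x y : 'I_n -> star R) :
  tbvec U c -> tbvec U x -> tbvec U y -> (forall i, tnegligible U (fun t => x i t - y i t)) ->
  (holds_res U (joinv x c) f <-> holds_res U (joinv y c) f).
Proof.
move=> hc hx hy h.
have h' : forall i, tnegligible U (fun t => y i t - x i t) by move=> i; exact: ng_swap.
elim: f => /= [p|p|g IH|g IHg hh IHh|g IHg hh IHh].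
- split=> H; [exact: ng_transfer H (env_cong p hc hx hy h)|exact: ng_transfer H (env_cong p hc hy hx h')].
- split=> H; [exact: res_pos_transfer H (env_cong p hc hx hy h)|exact: res_pos_transfer H (env_cong p hc hy hx h')].
- by rewrite IH.
- by rewrite IHg IHh.
- by rewrite IHg IHh.
Qed.

Lemma goodf_cong n m (c : 'I_m -> star R) (f : sform R (n + m)) (x y : 'I_n -> star R) :
  tbvec U c -> tbvec U x -> tbvec U y -> (forall i, tnegligible U (fun t => x i t - y i t)) ->
  goodf c f x -> goodf c f y.
Proof.
move=> hc hx hy h.
have h' : forall i, tnegligible U (fun t => y i t - x i t) by move=> i; exact: ng_swap.
elim: f => /= [p|p|g IH|g IHg hh IHh|g IHg hh IHh].
- move=> H hz hn; apply: (H hz); exact: ng_transfer hn (env_cong p hc hy hx h').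
- move=> H hz hn; apply: (H hz); exact: ng_transfer hn (env_cong p hc hy hx h').
- exact: IH.
- by case=> ? ?; split; [apply: IHg|apply: IHh].
- by case=> ? ?; split; [apply: IHg|apply: IHh].
Qed.

Definition TRUEf k : sform R k := FNot (FGt0 (PConst k 0)).
Definition FALSEf k : sform R k := FNot (FGt0 (PConst k 1)).

Lemma holds_TRUE k (e : 'I_k -> star R) : holds_star U e (TRUEf k).
Proof. move=> /= h; apply: (Unot h); apply: Utrue => t; by rewrite /peval_star /= ltxx. Qed.

Lemma holds_FALSE k (e : 'I_k -> star R) : ~ holds_star U e (FALSEf k).
Proof. move=> /= h; apply: h; apply: Utrue => t; by rewrite /peval_star /= ltr01. Qed.

Definition zb n m (c : 'I_m -> star R) (p : pterm R (n + m)) : bool :=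
  if excluded_middle_informative (Zp c p) then true else false.

Lemma zbP n m (c : 'I_m -> star R) (p : pterm R (n + m)) : zb c p = true <-> Zp c p.
Proof. by rewrite /zb; case: excluded_middle_informative. Qed.

Fixpoint tr n m (c : 'I_m -> star R) (f : sform R (n + m)) (b : bool) : sform R (n + m) :=
  match f with
  | FEq0 p => if zb c p then (if b then TRUEf _ else FALSEf _)
              else (if b then FAnd (FNot (FGt0 p)) (FNot (FGt0 (POpp p))) else TRUEf _)
  | FGt0 p => if zb c p then (if b then FALSEf _ else TRUEf _)
              else (if b then FNot (FGt0 (POpp p)) else FNot (FGt0 p))
  | FNot g => tr c g (~~ b)
  | FAnd g h => if b then FAnd (tr c g b) (tr c h b) else FOr (tr c g b) (tr c h b)
  | FOr g h => if b then FOr (tr c g b) (tr c h b) else FAnd (tr c g b) (tr c h b)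
  end.

Lemma tr_closed n m (c : 'I_m -> star R) (f : sform R (n + m)) b : closedf (tr c f b).
Proof.
elim: f b => /= [p|p|g IH|g IHg h IHh|g IHg h IHh] b.
- by case: (zb c p); case: b.
- by case: (zb c p); case: b.
- exact: IH.
- by case: b => /=; rewrite IHg IHh.
- by case: b => /=; rewrite IHg IHh.
Qed.

Lemma tr_corr n m (c : 'I_m -> star R) (f : sform R (n + m)) (x : 'I_n -> star R) :
  tbvec U c -> tbvec U x -> goodf c f x -> forall b,
  (holds_star U (joinv x c) (tr c f b) <->
   (if b then holds_res U (joinv x c) f else ~ holds_res U (joinv x c) f)).
Proof.
move=> hc hx; elim: f => [p|p|g IH|g IHg h IHh|g IHg h IHh] /= hg b.
- case E: (zb c p).
    have hz : tnegligible U (peval_star (joinv x c) p) by apply: (proj1 (zbP c p) E).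
    case: b.
      by split=> _; [exact: hz|exact: holds_TRUE].
    by split=> H; [exfalso; exact: holds_FALSE H|].
  have hn : ~ tnegligible U (peval_star (joinv x c) p).
    apply: hg => hz; move/zbP: hz; by rewrite E.
  case: b.
    split=> [[H1 H2]|H]; last by [].
    by exfalso; apply: (nn_sign hn); split.
  by split=> _; [|exact: holds_TRUE].
- case E: (zb c p).
    have hz : tnegligible U (peval_star (joinv x c) p) by apply: (proj1 (zbP c p) E).
    case: b.
      by split=> H; [exfalso; exact: holds_FALSE H|exfalso; exact: ng_not_pos hz H].
    by split=> _; [exact: ng_not_pos hz|exact: holds_TRUE].
  have hn : ~ tnegligible U (peval_star (joinv x c) p).
    apply: hg => hz; move/zbP: hz; by rewrite E.
  case: b; [exact: nn_pos hn|exact: nn_neg hn].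
- rewrite (IH hg (~~ b)); case: b => /=; first by [].
  by split=> [H H'|H]; [exact: H' H|exact: NNPP H].
- case: hg => hg1 hg2; case: b => /=.
    by rewrite (IHg hg1 true) (IHh hg2 true).
  rewrite (IHg hg1 false) (IHh hg2 false); split.
    by case=> H [H1 H2]; apply: H.
  by move=> H; apply: NNPP => H'; apply: H; split; apply: NNPP => H''; apply: H'; [left|right].
- case: hg => hg1 hg2; case: b => /=.
    by rewrite (IHg hg1 true) (IHh hg2 true).
  rewrite (IHg hg1 false) (IHh hg2 false); split.
    by case=> H1 H2 [H|H]; [apply: H1|apply: H2].
  by move=> H; split=> H'; apply: H; [left|right].
Qed.

Lemma split_l p q (j : 'I_p) : split (lshift q j) = inl j.
Proof. exact: (unsplitK (inl j)). Qed.
Lemma split_r p q (j : 'I_q) : split (rshift p j) = inr j.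
Proof. exact: (unsplitK (inr j)). Qed.

Fixpoint pren k k' (r : 'I_k -> 'I_k') (p : pterm R k) : pterm R k' :=
  match p with
  | PVar i => PVar R (r i)
  | PConst c => PConst k' c
  | PAdd p q => PAdd (pren r p) (pren r q)
  | POpp p => POpp (pren r p)
  | PMul p q => PMul (pren r p) (pren r q)
  end.

Fixpoint sren k k' (r : 'I_k -> 'I_k') (f : sform R k) : sform R k' :=
  match f with
  | FEq0 p => FEq0 (pren r p)
  | FGt0 p => FGt0 (pren r p)
  | FNot g => FNot (sren r g)
  | FAnd g h => FAnd (sren r g) (sren r h)
  | FOr g h => FOr (sren r g) (sren r h)
  end.

Lemma peval_ren k k' (r : 'I_k -> 'I_k') (e : 'I_k' -> star R) (p : pterm R k) t :
  peval_star e (pren r p) t = peval_star (fun i => e (r i)) p t.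
Proof.
rewrite /peval_star; elim: p => /= [i|c|p hp q hq|p hp|p hp q hq] //.
- by rewrite hp hq.
- by rewrite hp.
- by rewrite hp hq.
Qed.

Lemma holds_ren k k' (r : 'I_k -> 'I_k') (e : 'I_k' -> star R) (f : sform R k) :
  holds_star U e (sren r f) <-> holds_star U (fun i => e (r i)) f.
Proof.
elim: f => /= [p|p|g IH|g IHg h IHh|g IHg h IHh].
- by split; apply: Umono => t; rewrite peval_ren.
- by split; apply: Umono => t; rewrite peval_ren.
- by rewrite IH.
- by rewrite IHg IHh.
- by rewrite IHg IHh.
Qed.

Lemma closed_ren k k' (r : 'I_k -> 'I_k') (f : sform R k) : closedf (sren r f) = closedf f.
Proof.
elim: f => //= [g IH|g IHg h IHh|g IHg h IHh]; last 2 first.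
- by rewrite IHg IHh.
- by rewrite IHg IHh.
by case: g {IH}.
Qed.

Fixpoint boxsum n k (xi : 'I_n -> 'I_k) (l : seq 'I_n) : pterm R k :=
  match l with
  | [::] => PConst k 0
  | i :: l => PAdd (PMul (PVar R (xi i)) (PVar R (xi i))) (boxsum xi l)
  end.

Lemma boxsum_ge n k (xi : 'I_n -> 'I_k) (e : 'I_k -> star R) t (l : seq 'I_n) :
  0 <= peval_star e (boxsum xi l) t /\
  forall i, i \in l -> e (xi i) t ^+ 2 <= peval_star e (boxsum xi l) t.
Proof.
rewrite /peval_star; elim: l => [|j l [IH1 IH2]] /=; first by split.
have hj : 0 <= e (xi j) t * e (xi j) t by rewrite -expr2 sqr_ge0.
split; first exact: addr_ge0.
move=> i; rewrite inE => /orP[/eqP ->|hi].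
  by rewrite expr2 lerDl.
apply: le_trans (IH2 i hi) _; by rewrite lerDr.
Qed.

Lemma boxsum_le n k (xi : 'I_n -> 'I_k) (e : 'I_k -> star R) t (l : seq 'I_n) B :
  (forall i, e (xi i) t ^+ 2 <= B) -> peval_star e (boxsum xi l) t <= (size l)%:R * B.
Proof.
move=> hB; rewrite /peval_star; elim: l => [|j l IH] /=; first by rewrite mul0r.
rewrite -addn1 natrD mulrDl mul1r addrC; apply: lerD => //; by rewrite -expr2.
Qed.

Lemma norm_le_sq (y : R) : `|y| <= y ^+ 2 + 1.
Proof.
case: (lerP `|y| 1) => h.
  apply: le_trans h _; rewrite lerDr; exact: sqr_ge0.
have e : y ^+ 2 = `|y| ^+ 2 by rewrite -normrX ger0_norm ?sqr_ge0.
rewrite e expr2; have := normr_ge0 y; nra.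
Qed.

Lemma main_thm n (K : ('I_n -> star R) -> Prop) :
  res_definable U K -> res_def_compact U K ->
  exists E : ('I_n -> star R) -> Prop,
    [/\ star_definable U E, star_def_compact U E,
        (forall x, E x -> tbvec U x)
      & res_dim_lt U (symdiff (reduction U E) K) n].
Proof.
move=> [m [f [c [hc hK]]]] [_ [M [hM hMb]]].
pose W : star R := fun t => n%:R * (`|M t| + 1) ^+ 2.
pose c' : 'I_(m + 1) -> star R := joinv c (fun _ : 'I_1 => W).
pose r : 'I_(n + m) -> 'I_(n + (m + 1)) := fun i =>
  match split i with inl j => lshift (m + 1) j | inr j => rshift n (lshift 1 j) end.
pose xi : 'I_n -> 'I_(n + (m + 1)) := fun j => lshift (m + 1) j.
pose iW : 'I_(n + (m + 1)) := rshift n (rshift m (@ord0 0)).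
pose boxf := FNot (FGt0 (PAdd (boxsum xi (enum 'I_n)) (POpp (PVar R iW)))).
pose g := FAnd boxf (sren r (tr c f true)).
pose E x := holds_star U (joinv x c') g.
have jr : forall x, (fun i => joinv x c' (r i)) = joinv x c.
  move=> x; apply: functional_extensionality => i; rewrite /r /joinv.
  case: (split i) => j; first by rewrite split_l.
  by rewrite split_r /c' /joinv split_l.
have jx : forall x j, joinv x c' (xi j) = x j by move=> x j; rewrite /joinv /xi split_l.
have jW : forall x, joinv x c' iW = W by move=> x; rewrite /joinv /iW split_r /c' /joinv split_r.
have hQ : forall x t, peval_star (joinv x c') (PAdd (boxsum xi (enum 'I_n)) (POpp (PVar R iW))) t =
    peval_star (joinv x c') (boxsum xi (enum 'I_n)) t - W t.
  by move=> x t; rewrite /peval_star /= jW.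
have hEbox : forall x, E x -> forall i, U (fun t => `|x i t| <= W t + 1).
  move=> x [hb _] i; have hb' := Unegb hb.
  apply: Umono hb' => t; rewrite hQ => h.
  have h' : peval_star (joinv x c') (boxsum xi (enum 'I_n)) t <= W t.
    by move: h; rewrite subr_gt0 => /negP; rewrite -leNgt.
  have [_ h2] := boxsum_ge xi (joinv x c') t (enum 'I_n).
  have := h2 i (mem_enum _ i); rewrite jx => h3.
  apply: le_trans (norm_le_sq _) _; apply: lerD => //; exact: le_trans h3 h'.
have hM1 : tbounded U (fun t => `|M t| + 1).
  apply: tb_add (tb_const 1); apply: (tb_le hM); apply: Utrue => t; by rewrite normr_id.
have tbW1 : tbounded U (fun t => W t + 1).
  apply: tb_add (tb_const 1).
  apply: (tb_eq (y := fun t => n%:R * ((`|M t| + 1) * (`|M t| + 1)))).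
    exact: tb_mul (tb_const _) (tb_mul hM1 hM1).
  by apply: Utrue => t; rewrite /W expr2.
have Etb : forall x, E x -> tbvec U x.
  move=> x hx i; apply: (tb_le tbW1); apply: Umono (hEbox x hx i) => t h.
  exact: le_trans h (ler_norm _).
have hcorr : forall x, tbvec U x -> goodf c f x ->
    (holds_star U (joinv x c') (sren r (tr c f true)) <-> holds_res U (joinv x c) f).
  move=> x hx hg; rewrite holds_ren jr; exact: (tr_corr hc hx hg true).
have Ered : forall y, tbvec U y -> goodf c f y -> (reduction U E y <-> K y).
  move=> y hy hg; rewrite (hK y hy); split.
    move=> [x [hEx hxy]]; have hx := Etb x hEx.
    have hgx : goodf c f x := goodf_cong hc hy hx (fun i => ng_swap (hxy i)) hg.
    have H0 : holds_star U (joinv x c') (sren r (tr c f true)) := proj2 hEx.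
    have H := proj1 (hcorr x hx hgx) H0.
    exact: (proj1 (holds_res_cong f hc hx hy hxy) H).
  move=> hKy; exists y; split; last first.
    by move=> i; apply: (ng_eq ng_0); apply: Utrue => t; rewrite subrr.
  split; last exact: (proj2 (hcorr y hy hg) hKy).
  have hyb : forall i, U (fun t => y i t ^+ 2 <= (`|M t| + 1) ^+ 2).
    move=> i; have [h1 h2] := hMb y hy (proj2 (hK y hy) hKy) i.
    have u1 : U (fun t => y i t - M t <= 1).
      apply: Umono (Unegb (fun H => h1 (ex_intro _ 0%N H))) => t /=; rewrite expr0 => H.
      by rewrite leNgt; apply/negP.
    have u2 : U (fun t => - M t - y i t <= 1).
      apply: Umono (Unegb (fun H => h2 (ex_intro _ 0%N H))) => t /=; rewrite expr0 => H.
      by rewrite leNgt; apply/negP.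
    apply: Umono (Uand u1 u2) => t [v1 v2].
    have : `|y i t| <= `|M t| + 1.
      have := ler_norm (M t); have := ler_norm (- M t); rewrite normrN => w1 w2.
      rewrite ler_norml; apply/andP; split; lra.
    move=> hh; rewrite -[y i t ^+ 2]ger0_norm ?sqr_ge0 // normrX.
    apply: lerXn2r => //; rewrite ?nnegrE ?normr_ge0 //; apply: addr_ge0 => //; exact: normr_ge0.
  move=> /= hpos; apply: (Unot hpos); apply: Umono (Ufin hyb) => t H.
  rewrite hQ subr_gt0; apply/negP; rewrite -leNgt.
  have HH := @boxsum_le _ _ xi (joinv y c') t (enum 'I_n) ((`|M t| + 1) ^+ 2).
  move: HH; rewrite size_enum_ord => HH; apply: HH => i; by rewrite jx.
exists E; split.
- by exists (m + 1), g, c'.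
- split.
    apply: closed_E; rewrite /g /= closed_ren; exact: tr_closed.
  by exists (fun t => W t + 1) => x hx i; apply: hEbox.
- exact: Etb.
- move=> s sinj [z [eps [hz [heb [hep Hint]]]]].
  pose si := invF sinj.
  pose z0 i := z (si i).
  have hz0 : tbvec U z0 by move=> i; exact: hz.
  have [z' [e' [hz' [he' Hv]]]] := nowhere f hc hz0 hep.
  have hin : res_inbox U z' e' z'.
    move=> i; split; apply: (res_pos_le he'); apply: Utrue => t /=; lra.
  have [hbox hgood] := Hv z' hin.
  pose w j := z' (s j).
  have hw : tbvec U w by move=> j; exact: hz'.
  have hwb : res_inbox U z eps w.
    by move=> j; have := hbox (s j); rewrite /z0 /si invF_f.
  have [y [hy [hSy hyw]]] := Hint w hw hwb.
  have hyz : forall i, tnegligible U (fun t => y i t - z' i t).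
    by move=> i; have := hyw (si i); rewrite /w /si f_invF.
  have hgy := goodf_cong hc hz' hy (fun i => ng_swap (hyz i)) hgood.
  have := Ered y hy hgy.
  by case: hSy => [[h1 h2]|[h1 h2]] [H1 H2]; [apply: h2; apply: H1|apply: h2; apply: H2].
Qed.



End Main.

Theorem corollary3p7 (R : realType) (U : (cplx R -> Prop) -> Prop)
  (hU : is_ultrafilter U) (hnp : non_principal U) (h0 : converges_to_0 U)
  (n : nat) (K : ('I_n -> star R) -> Prop)
  (hKdef : res_definable U K) (hKcpt : res_def_compact U K) :
  exists E : ('I_n -> star R) -> Prop,
    [/\ star_definable U E, star_def_compact U E,
        (forall x, E x -> tbvec U x)
      & res_dim_lt U (symdiff (reduction U E) K) n].
Proof. exact: (main_thm hU hnp h0 hKdef hKcpt). Qed.
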